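(* For all integers $n\ge0$, $pl_2(5n+3)\equiv0\pmod5$ and $pl_2(5n+4)\equiv0\pmod5$.
   Context: $pl_2(n)$ denotes the number of $2$-component plane partitions of $n$ (plane partitions of $n$ all of whose entries are $\le 2$), with $pl_2(0)=1$; equivalently $\sum_{n\ge0}pl_2(n)q^n=\frac{1}{1-q}\prod_{n=2}^{\infty}(1-q^n)^{-2}$. *)

(* Defs.v *)
From mathcomp Require Import all_boot.
Set Implicit Arguments. Unset Strict Implicit. Unset Printing Implicit Defensive.

Definition fps := nat -> nat.

Definition fps_mul (f g : fps) : fps :=
  fun n => \sum_(i < n.+1) f i * g (n - i).

(* 1/(1-q) = sum_{k>=0} q^k *)
Definition fps_geom : fps := fun _ => 1.

(* (1-q^m)^{-2} = sum_{j>=0} (j+1) q^{m j}, for m >= 1 *)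
Definition fps_inv_sq (m : nat) : fps :=
  fun k => if m %| k then (k %/ m).+1 else 0.

Fixpoint pl2_partial (N : nat) : fps :=
  match N with
  | 0 => fps_geom
  | 1 => fps_geom
  | N'.+1 => fps_mul (pl2_partial N') (fps_inv_sq N'.+1)
  end.

(* pl_2(n) = coefficient of q^n in 1/(1-q) prod_{m>=2} (1-q^m)^{-2}.
   Factors with m > n are 1 + O(q^{m}) and do not affect the coefficient
   of q^n, so the coefficient of q^n of the infinite product equals that
   of the partial product up to m = n. *)
Definition pl2 (n : nat) : nat := pl2_partial n n.

(* Main.v *)
Require Import Defs.
From mathcomp Require Import all_boot all_algebra ring zify.
Set Implicit Arguments. Unset Strict Implicit. Unset Printing Implicit Defensive.
Import GRing.Theory.

Module MA.

Section Eqmod.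
Local Open Scope ring_scope.
Variable R : comNzRingType.
Implicit Types p r : {poly R}.

Definition eqmod (L : nat) p r := forall i, (i < L)%N -> p`_i = r`_i.

Lemma eqmod_refl L p : eqmod L p p. Proof. by []. Qed.
Lemma eqmod_sym L p r : eqmod L p r -> eqmod L r p.
Proof. by move=> H i Hi; rewrite H. Qed.
Lemma eqmod_trans L p r s : eqmod L p r -> eqmod L r s -> eqmod L p s.
Proof. by move=> H1 H2 i Hi; rewrite H1 // H2. Qed.
Lemma eqmod_le L L' p r : (L' <= L)%N -> eqmod L p r -> eqmod L' p r.
Proof. by move=> HL H i Hi; apply: H; apply: leq_trans HL. Qed.
Lemma eqmodD L p p' r r' : eqmod L p p' -> eqmod L r r' -> eqmod L (p + r) (p' + r').
Proof. by move=> H1 H2 i Hi; rewrite !coefD H1 // H2. Qed.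
Lemma eqmodN L p p' : eqmod L p p' -> eqmod L (- p) (- p').
Proof. by move=> H1 i Hi; rewrite !coefN H1. Qed.
Lemma eqmodM L p p' r r' : eqmod L p p' -> eqmod L r r' -> eqmod L (p * r) (p' * r').
Proof.
move=> H1 H2 i Hi; rewrite !coefM; apply: eq_bigr => j _.
have Hj : (j <= i)%N by rewrite -ltnS.
rewrite H1 ?H2 //; first by apply: leq_ltn_trans (leq_subr _ _) Hi.
exact: leq_ltn_trans Hj Hi.
Qed.
Lemma eqmod_sum L (I : Type) (s : seq I) (P : pred I) (F G : I -> {poly R}) :
  (forall i, P i -> eqmod L (F i) (G i)) ->
  eqmod L (\sum_(i <- s | P i) F i) (\sum_(i <- s | P i) G i).
Proof.
move=> H; apply: (big_ind2 (eqmod L)) => //; first by move=> *; apply: eqmodD.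
Qed.
Lemma eqmod_prod L (I : Type) (s : seq I) (P : pred I) (F G : I -> {poly R}) :
  (forall i, P i -> eqmod L (F i) (G i)) ->
  eqmod L (\prod_(i <- s | P i) F i) (\prod_(i <- s | P i) G i).
Proof.
move=> H; apply: (big_ind2 (eqmod L)) => //; first by move=> *; apply: eqmodM.
Qed.
Lemma eqmodXnM L t p r : eqmod L p r -> eqmod (L + t) ('X^t * p) ('X^t * r).
Proof.
move=> H i Hi; rewrite !coefXnM; case: ltnP => // Hti; apply: H.
by rewrite ltn_subLR // addnC.
Qed.
End Eqmod.

Section Qbin.
Local Open Scope ring_scope.
Variable R : nzRingType.
Fixpoint qbin (q : R) (N j : nat) : R :=
  match N with
  | 0 => (j == 0)%:R
  | N'.+1 => match j with
             | 0 => 1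
             | j'.+1 => qbin q N' j' + q ^+ j'.+1 * qbin q N' j'.+1
             end
  end.
Lemma qbin_N0 q N : qbin q N 0 = 1. Proof. by case: N. Qed.
Lemma qbin_gt q N j : (N < j)%N -> qbin q N j = 0.
Proof.
elim: N j => [|N IH] [|j] //= Hj.
by rewrite !IH ?mulr0 ?addr0 // ltnW.
Qed.
End Qbin.

Lemma qbin_morph (R S : nzRingType) (f : {rmorphism R -> S}) q N j :
  f (qbin q N j) = qbin (f q) N j.
Proof.
elim: N j => [|N IH] [|j] /=; rewrite ?rmorph_nat ?rmorph1 //.
by rewrite rmorphD rmorphM rmorphXn !IH.
Qed.

End MA.
Import MA.

Module MB.
Local Open Scope ring_scope.

Lemma bin2S j : 'C(j.+1, 2) = ('C(j, 2) + j)%N.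
Proof. by rewrite binS bin1 addnC. Qed.

Lemma qbinom (R : comNzRingType) (q : R) N : forall x y,
  \prod_(i < N) (y + x * q ^+ i) =
  \sum_(j < N.+1) q ^+ 'C(j, 2) * qbin q N j * x ^+ j * y ^+ (N - j).
Proof.
elim: N => [|N IH] x y.
  by rewrite big_ord0 big_ord1 /= bin0n /= subnn !expr0 !mulr1.
rewrite big_ord_recl /= expr0 mulr1.
under eq_bigr => i _ do rewrite /bump /= add1n exprS mulrA [x * q]mulrC.
rewrite IH [RHS]big_ord_recl /= bin0n /= !expr0 !mul1r subn0.
set f := fun j : nat => q ^+ ('C(j, 2) + j) * qbin q N j * x ^+ j * y ^+ (N.+1 - j).
have Hy : y * \sum_(j < N.+1) q ^+ 'C(j, 2) * qbin q N j * (q * x) ^+ j * y ^+ (N - j)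
   = \sum_(j < N.+2) f j.
  rewrite big_distrr /= [in RHS]big_ord_recr /= /f qbin_gt // mulr0 !mul0r addr0.
  apply: eq_bigr => j _; rewrite exprMn exprD subSn; last by rewrite -ltnS.
  by rewrite exprS; ring.
rewrite mulrDl Hy big_ord_recl /f /= qbin_N0 bin0n addn0 /= !expr0 !mulr1 subn0 mul1r.
rewrite -addrA; congr (_ + _).
rewrite big_distrr -big_split /=; apply: eq_bigr => j _.
rewrite /bump /= add1n bin2S subSS exprMn !exprD !exprS !add0n; ring.
Qed.

End MB.
Import MB.

Module MC.
Local Open Scope ring_scope.

Section Prod.
Variable R : comNzRingType.
Definition Pr n : {poly R} := \prod_(i < n) (1 - 'X^(i.+1)).
Definition qfall N j : {poly R} := \prod_(i < j) (1 - 'X^(N - j + i.+1)).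

Lemma PrS n : Pr n.+1 = Pr n * (1 - 'X^(n.+1)).
Proof. by rewrite /Pr big_ord_recr. Qed.

Lemma qfallS N j : (j <= N)%N -> qfall N.+1 j.+1 = qfall N j * (1 - 'X^(N.+1)).
Proof.
move=> Hj; rewrite /qfall big_ord_recr /= subSS.
have -> : (N - j + j.+1 = N.+1)%N by rewrite addnS subnK.
congr (_ * _); apply: eq_bigr => i _; by rewrite subSS.
Qed.

Lemma qfallSr N j : (j < N)%N -> qfall N j.+1 = (1 - 'X^(N - j)) * qfall N j.
Proof.
move=> Hj; rewrite /qfall big_ord_recl /= addn1 subnSK //.
congr (_ * _); apply: eq_bigr => i _.
rewrite /bump /= add1n; congr (1 - 'X^_).
lia.
Qed.

Lemma qbin_Pr N j : (j <= N)%N -> qbin 'X N j * Pr j = qfall N j.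
Proof.
elim: N j => [|N IH] [|j] //=.
- by rewrite /Pr /qfall !big_ord0 mulr1.
- by rewrite /Pr /qfall !big_ord0 mulr1.
rewrite ltnS => Hj; rewrite PrS qfallS //.
case: (ltngtP j N) Hj => // [HjN|->] _.
  rewrite -PrS mulrDl -mulrA IH // PrS mulrA IH; last exact: ltnW HjN.
  rewrite qfallSr // (_ : N.+1 = j.+1 + (N - j))%N; last by lia.
  rewrite exprD; ring.
by rewrite (qbin_gt _ (ltnSn N)) mulr0 addr0 mulrA IH.
Qed.

Lemma eqmod_1X L a : (L <= a)%N -> eqmod L (1 - 'X^a : {poly R}) 1.
Proof.
move=> Ha i Hi; rewrite coefB coefXn.
have -> : (i == a) = false by apply/negbTE; rewrite neq_ltn (leq_trans Hi Ha).
by rewrite subr0.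
Qed.

Lemma eqmod_prod1X L (I : Type) (s : seq I) (P : pred I) (F : I -> nat) :
  (forall i, P i -> L <= F i)%N ->
  eqmod L (\prod_(i <- s | P i) (1 - 'X^(F i)) : {poly R}) 1.
Proof.
move=> H; apply: (big_ind (fun p => eqmod L p 1)) => //.
  by move=> p r Hp Hr; rewrite -(mulr1 1); apply: eqmodM.
by move=> i Pi; apply: eqmod_1X; apply: H.
Qed.
End Prod.

End MC.
Import MC.

Module MD.
Local Open Scope ring_scope.

Section Prods.
Variable R : comNzRingType.

Lemma prodA n : \prod_(i < n) ('X^n - 'X^i : {poly R}) = (-1)^+n * 'X^('C(n,2)) * Pr R n.
Proof.
transitivity (\prod_(i < n) ((-1) * 'X^i * (1 - 'X^(n - i)) : {poly R})).
  apply: eq_bigr => i _; rewrite mulrBr mulr1 -mulrA -exprD subnKC; last exact: ltnW.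
  ring.
rewrite !big_split /= prodr_const card_ord prodrXr.
rewrite -(big_mkord xpredT (fun i => i)) bin2_sum; congr (_ * _).
rewrite /Pr (reindex_inj rev_ord_inj) /=; apply: eq_bigr => i _.
congr (1 - GRing.exp _ _); have := ltn_ord i; lia.
Qed.

Lemma prodC n : \prod_(i < n) ('X^n - 'X^(n + i.+1) : {poly R}) = 'X^(n * n) * Pr R n.
Proof.
transitivity (\prod_(i < n) ('X^n * (1 - 'X^(i.+1)) : {poly R})).
  by apply: eq_bigr => i _; rewrite mulrBr mulr1 -exprD.
by rewrite big_split /= prodr_const card_ord -exprM.
Qed.
End Prods.

End MD.
Import MD.

Module ME.
Local Open Scope ring_scope.

Section Jac.
Variable R : comNzRingType.
Notation P := {poly R}.

Lemma D1_ZXn (c : P) j : ((c *: ('X^j : {poly P}))^`()).[1] = c * j%:R.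
Proof. by rewrite derivZ derivXn hornerZ hornerMn hornerXn expr1n. Qed.

Lemma D1_term n0 a N j m :
  ((('X : P)%:P)^+a * qbin (('X : P)%:P) N j * (- 'X)^+j * (('X : P)%:P ^+ n0)^+m)^`().[1]
  = 'X^a * qbin 'X N j * 'X^(n0 * m) * ((-1)^+j * j%:R).
Proof.
rewrite -(qbin_morph polyC) -!polyC_exp -exprM.
rewrite (_ : _ * _ = ('X^a * qbin 'X N j * 'X^(n0 * m) * (-1)^+j) *: 'X^j); last first.
  by rewrite -mul_polyC !polyCM rmorph_sign [(- 'X)^+ j]exprNn; ring.
by rewrite D1_ZXn mulrA.
Qed.

Lemma D1_prod3 (A g C : {poly P}) : g.[1] = 0 ->
  ((A * (g * C))^`()).[1] = A.[1] * (g^`()).[1] * C.[1].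
Proof. by move=> H; rewrite !derivM !(hornerD, hornerM) H; ring. Qed.

Lemma jac_raw n :
 (-1)^+n * 'X^('C(n,2)) * Pr R n * (- 'X^n) * ('X^(n*n) * Pr R n) =
 \sum_(j < (n + n.+1).+1) 'X^('C(j,2)) * qbin 'X (n + n.+1) j
    * 'X^(n * (n + n.+1 - j)) * ((-1)^+j * j%:R).
Proof.
have Hq := qbinom (('X : P)%:P) (n + n.+1) (- 'X) (('X : P)%:P ^+ n).
have := congr1 (fun p : {poly P} => (p^`()).[1]) Hq.
rewrite /= raddf_sum horner_sum (eq_bigr _ (fun j _ => D1_term _ _ _ _ _)) => <-.
rewrite big_split_ord /= big_ord_recl /= addn0 -!polyC_exp.
have g1 : (('X^n)%:P + - 'X * ('X^n)%:P : {poly P}).[1] = 0.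
  by rewrite hornerD hornerM hornerN hornerX hornerC mulN1r subrr.
have gd : (('X^n)%:P + - 'X * ('X^n)%:P : {poly P})^`().[1] = - 'X^n.
  by rewrite derivD derivC derivM derivN derivX derivC mulr0 addr0 mulN1r add0r hornerN hornerC.
have hf : forall k, (('X^n)%:P + - 'X * (('X : P)%:P)^+k : {poly P}).[1] = 'X^n - 'X^k.
  by move=> k; rewrite -polyC_exp hornerD hornerM hornerN hornerX !hornerC mulN1r.
rewrite D1_prod3 // gd !horner_prod.
under eq_bigr => i _ do rewrite hf.
rewrite [X in _ = _ * X](eq_bigr (fun i : 'I_n => 'X^n - 'X^(n + i.+1))); last first.
  by move=> i _; rewrite hf /bump add1n.
rewrite prodA prodC; ring.
Qed.
End Jac.

End ME.
Import ME.

Module MF.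

Lemma bin2_dbl m : ('C(m, 2) * 2 = m * m.-1)%N.
Proof.
elim: m => [|m IH]; first by rewrite bin0n.
rewrite bin2S mulnDl IH; case: m {IH} => [|m] /=; lia.
Qed.

Definition ttx n j := ('C(j - n, 2) + 'C(n.+1 - j, 2))%N.

Lemma tt_exp n j : (j <= n + n.+1)%N ->
  ('C(j, 2) + n * (n + n.+1 - j) = 'C(n, 2) + n + n * n + ttx n j)%N.
Proof.
move=> Hj; apply/eqP; rewrite -(eqn_pmul2r (isT : 0 < 2)%N); apply/eqP.
rewrite /ttx !mulnDl !bin2_dbl.
case: (leqP j n) => Hjn.
  have [d Hd] : exists d, n = (j + d)%N by exists (n - j); lia.
  subst n; rewrite (_ : j - (j + d) = 0)%N; last by lia.
  rewrite (_ : (j + d).+1 - j = d.+1)%N; last by lia.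
  case: j Hj Hjn => [|j] /=; case: d => [|d] /=; nia.
have [d Hd] : exists d, j = (n.+1 + d)%N by exists (j - n.+1); lia.
subst j; rewrite (_ : n.+1 + d - n = d.+1)%N; last by lia.
rewrite (_ : n.+1 - (n.+1 + d) = 0)%N; last by lia.
rewrite (_ : n + n.+1 - (n.+1 + d) = n - d)%N; last by lia.
have Hdn : (d <= n)%N by lia.
have [e He] : exists e, n = (d + e)%N by exists (n - d); lia.
subst n; rewrite (_ : d + e - d = e)%N; last by lia.
case: d Hj Hjn Hdn => [|d] /=; case: e => [|e] /=; nia.
Qed.

Section Jac2.
Local Open Scope ring_scope.
Variable R : idomainType.

Lemma jac n : ((-1)^+(n.+1) * Pr R n ^+ 2 : {poly R}) =
  \sum_(j < (n + n.+1).+1) ((-1)^+j * j%:R) * ('X^(ttx n j) * qbin 'X (n + n.+1) j).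
Proof.
apply: (@mulfI _ ('X^('C(n,2) + n + n*n))).
  by rewrite expf_neq0 // polyX_eq0.
have H := jac_raw R n.
rewrite big_distrr /=.
rewrite (_ : _ * (_ * _) = (-1)^+n * 'X^('C(n,2)) * Pr R n * (- 'X^n) * ('X^(n*n) * Pr R n)); last first.
  by rewrite !exprD exprS; ring.
rewrite H; apply: eq_bigr => j _.
rewrite (_ : 'X^('C(n,2)+n+n*n) * _ = 'X^('C(n,2)+n+n*n + ttx n j) *
   (((-1)^+j * j%:R) * qbin 'X (n+n.+1) j)); last first.
  by rewrite [in RHS]exprD; ring.
rewrite -tt_exp; last by rewrite -ltnS.
rewrite exprD; ring.
Qed.
End Jac2.

End MF.
Import MF.

Module MG.

Section G.
Local Open Scope ring_scope.
Variable R : idomainType.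
Notation P := {poly R}.

Lemma Pr_split a b : Pr R (a + b) = Pr R a * \prod_(i < b) (1 - 'X^(a + i.+1)).
Proof. by rewrite /Pr big_split_ord /=; congr (_ * _); apply: eq_bigr => i _; rewrite addnS. Qed.

Lemma W_lo n j : (j <= n)%N ->
  eqmod j.+1 (qbin 'X (n + n.+1) j * Pr R n) 1.
Proof.
move=> Hj; rewrite -(subnKC Hj) Pr_split subnKC // mulrA qbin_Pr; last by lia.
rewrite -[X in eqmod _ _ X](mulr1 1); apply: eqmodM; rewrite ?/qfall; apply: eqmod_prod1X => i _; lia.
Qed.

Lemma W_hi n j : (n < j)%N -> (j <= n + n.+1)%N ->
  eqmod (n + n.+1 - j).+1 (qbin 'X (n + n.+1) j * Pr R n) 1.
Proof.
move=> Hj HjN.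
have HR : eqmod (n + n.+1 - j).+1 (\prod_(i < j - n) (1 - 'X^(n + i.+1)) : P) 1.
  by rewrite ?/qfall; apply: eqmod_prod1X => i _; lia.
have HQ : eqmod (n + n.+1 - j).+1 (qfall R (n + n.+1) j) 1.
  by rewrite ?/qfall; apply: eqmod_prod1X => i _; lia.
rewrite -qbin_Pr // -(subnKC (ltnW Hj)) Pr_split subnKC ?(ltnW Hj) // mulrA in HQ.
apply: eqmod_trans HQ.
rewrite -{1}(mulr1 (_ * Pr R n)); apply: eqmodM => //; exact: eqmod_sym.
Qed.

Lemma bin2_ge d : (d.-1 <= 'C(d, 2))%N.
Proof. have := bin2_dbl d; case: d => [|d] /=; nia. Qed.

Lemma jac_trunc n : eqmod n.+1 ((-1)^+(n.+1) * Pr R n ^+ 3)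
  (\sum_(j < (n + n.+1).+1) ((-1)^+j * j%:R) * 'X^(ttx n j)).
Proof.
rewrite (_ : _ * _ ^+ 3 = ((-1)^+(n.+1) * Pr R n ^+ 2) * Pr R n); last by rewrite exprS; ring.
rewrite jac big_distrl /=.
apply: eqmod_sum => j _.
rewrite (_ : _ * Pr R n = ((-1)^+j * j%:R) * ('X^(ttx n j) * (qbin 'X (n+n.+1) j * Pr R n)));
  last by ring.
apply: eqmodM => //.
have Hj : (j <= n + n.+1)%N by rewrite -ltnS.
rewrite -{2}(mulr1 'X^(ttx n j)).
case: (leqP j n) => Hjn.
  apply: (eqmod_le _ (eqmodXnM (t := ttx n j) (W_lo Hjn))).
  have := bin2_ge (n.+1 - j); rewrite /ttx; lia.
apply: (eqmod_le _ (eqmodXnM (t := ttx n j) (W_hi Hjn Hj))).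
have := bin2_ge (j - n); rewrite /ttx; lia.
Qed.
End G.

End MG.
Import MG.

Module MH.

Lemma five_div k : (2 <= 'C(k.+1,2) %% 5)%N -> (5 %| (2*k+1))%N.
Proof.
move=> Hs; have H := bin2_dbl k.+1; rewrite /= in H.
have [q Hq] : exists q, k = (5 * q + k %% 5)%N by exists (k %/ 5); rewrite {1}(divn_eq k 5); lia.
have [p Hp] : exists p, 'C(k.+1,2) = (5 * p + 'C(k.+1,2) %% 5)%N.
  by exists ('C(k.+1,2) %/ 5); rewrite {1}(divn_eq ('C(k.+1,2)) 5); lia.
have Hr : (k %% 5 < 5)%N by rewrite ltn_mod.
have Hs5 : ('C(k.+1,2) %% 5 < 5)%N by rewrite ltn_mod.
move: Hs Hs5 Hr H Hp Hq.
move: (k %% 5) ('C(k.+1,2)) => r c Hs Hs5 Hr H Hp Hq.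
move: (c %% 5) Hs Hs5 Hp => s Hs Hs5 Hp; subst c k.
move: H; case: r Hr => [|[|[|[|[|r]]]]] // _; case: s Hs Hs5 => [|[|[|[|[|s]]]]] // _ _ H; nia.
Qed.

Section H.
Local Open Scope ring_scope.
Lemma pair_sum (V : nmodType) n (f : nat -> V) :
  \sum_(j < (n + n.+1).+1) f j = \sum_(k < n.+1) (f (n.+1 + k)%N + f (n - k)%N).
Proof.
rewrite -addSn big_split_ord /= big_split /= addrC; congr (_ + _).
rewrite (reindex_inj rev_ord_inj) /=; apply: eq_bigr => i _; by rewrite subSS.
Qed.

Variable R : idomainType.
Hypothesis h5 : (5%:R : R) = 0.
Notation P := {poly R}.

Lemma coef_cX j t M : (((-1)^+j * j%:R : P) * 'X^t)`_M = (-1)^+j * j%:R * (M == t)%:R.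
Proof. by rewrite -(rmorph_sign polyC) -polyC_natr -polyCM coefCM coefXn. Qed.

Lemma Pr3_coef n M : (M <= n)%N -> (2 <= M %% 5)%N -> (Pr R n ^+ 3)`_M = 0.
Proof.
move=> HM Hs.
have := @jac_trunc R n; move/(_ M); rewrite ltnS => /(_ HM).
rewrite -(rmorph_sign polyC) coefCM coef_sum (pair_sum n (fun j => ((-1)^+j * j%:R * 'X^(ttx n j) : P)`_M)) big1.
  by move/eqP; rewrite mulf_eq0 signr_eq0 /= => /eqP.
move=> k _; have Hk : (k <= n)%N by rewrite -ltnS.
rewrite !coef_cX.
have -> : ttx n (n.+1 + k) = 'C(k.+1, 2).
  rewrite /ttx (_ : (n.+1 + k - n = k.+1)%N); last by lia.
  by rewrite (_ : (n.+1 - (n.+1 + k) = 0)%N) ?bin0n ?addn0 //; lia.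
have -> : ttx n (n - k) = 'C(k.+1, 2).
  rewrite /ttx (_ : (n - k - n = 0)%N); last by lia.
  by rewrite (_ : (n.+1 - (n - k) = k.+1)%N) ?bin0n ?add0n //; lia.
case: eqP => [HMk|]; last by rewrite !mulr0 addr0.
have := five_div (k := k); rewrite -HMk => /(_ Hs) /dvdnP [m Hm].
rewrite (_ : (n.+1 + k = (n - k) + (2 * k + 1))%N); last by lia.
rewrite exprD natrD Hm natrM h5 mulr0 addr0 -Hm addn1 exprS (mulnC 2 k) exprM sqrr_sign /= !mulr1 mulrN1 mulNr addNr.
by [].
Qed.

End H.

End MH.
Import MH.

Module MI.

Section I.
Local Open Scope ring_scope.
Variable R : idomainType.
Hypothesis h5 : (5%:R : R) = 0.
Notation P := {poly R}.

Definition supp5 (p : P) := forall i, ~~ (5 %| i)%N -> p`_i = 0.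

Lemma supp5M p r : supp5 p -> supp5 r -> supp5 (p * r).
Proof.
move=> Hp Hr i Hi; rewrite coefM big1 // => j _.
case: (boolP (5 %| j)%N) => Hj; last by rewrite Hp ?mul0r.
rewrite Hr ?mulr0 //; apply: contra Hi => Hij.
have Hji : (j <= i)%N by rewrite -ltnS.
by rewrite -(subnKC Hji) dvdn_add.
Qed.

Lemma frob5 (y : P) : (1 - y) ^+ 5 = 1 - y ^+ 5.
Proof.
have h5P : (5%:R : P) = 0 by rewrite -polyC_natr h5.
have -> : (1 - y) ^+ 5 = 1 - y ^+ 5 + 5%:R * (- y + 2%:R * y ^+ 2 - 2%:R * y ^+ 3 + y ^+ 4).
  ring.
by rewrite h5P mul0r addr0.
Qed.

Lemma Pr5 n : Pr R n ^+ 5 = \prod_(i < n) (1 - 'X^(5 * i.+1)).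
Proof.
rewrite /Pr -prodrXl; apply: eq_bigr => i _; by rewrite frob5 -exprM mulnC.
Qed.

Lemma supp5_Pr5 n : supp5 (Pr R n ^+ 5).
Proof.
rewrite Pr5; apply: (big_ind supp5).
- by move=> i Hi; rewrite coefC; case: i Hi.
- exact: supp5M.
move=> i _ k Hk; rewrite coefB coefC coefXn.
have -> : (k == 0)%N = false by apply/negbTE; apply: contra Hk => /eqP ->.
have -> : (k == 5 * i.+1)%N = false by apply/negbTE; apply: contra Hk => /eqP ->; rewrite dvdn_mulr.
by rewrite subr0.
Qed.

Lemma Pr5_0 n : (Pr R n ^+ 5)`_0 = 1.
Proof.
rewrite -horner_coef0 horner_exp /Pr horner_prod big1 ?expr1n // => i _.
by rewrite hornerD hornerN hornerC hornerXn expr0n /= subr0.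
Qed.

Lemma key L (a C G : P) : eqmod L (a * C) G -> C`_0 = 1 -> supp5 C ->
  (forall i, (i < L)%N -> (3 <= i %% 5)%N -> G`_i = 0) ->
  forall i, (i < L)%N -> (3 <= i %% 5)%N -> a`_i = 0.
Proof.
move=> HaC HC0 HC HG; elim/ltn_ind => i IH HiL Hi.
have := HaC i HiL; rewrite HG // coefMr big_ord_recl /= subn0 HC0 mulr1 big1 ?addr0 //.
move=> j _; rewrite /bump /= add1n.
case: (boolP (5 %| j.+1)%N) => Hj; last by rewrite HC ?mulr0.
have Hji : (j < i)%N by have := ltn_ord j; lia.
rewrite IH ?mul0r //; try lia.
Qed.
End I.

End MI.
Import MI.

Module MJ.

Section J.
Local Open Scope ring_scope.
Variable R : idomainType.
Notation P := {poly R}.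

Definition tr L (f : nat -> nat) : P := \poly_(i < L) (f i)%:R.

Lemma tr_mul L f g : eqmod L (tr L (fps_mul f g)) (tr L f * tr L g).
Proof.
move=> i Hi; rewrite coefM coef_poly Hi /fps_mul natr_sum; apply: eq_bigr => j _.
have Hj : (j <= i)%N by rewrite -ltnS.
rewrite !coef_poly natrM (leq_ltn_trans Hj Hi) (leq_ltn_trans (leq_subr j i) Hi).
by [].
Qed.

Lemma step1X L (p r : P) m : (0 < m)%N ->
  (forall i, (i < L)%N -> p`_i - (if (i < m)%N then 0 else p`_(i - m)) = r`_i) ->
  eqmod L (p * (1 - 'X^m)) r.
Proof.
move=> Hm H i Hi; rewrite mulrBr mulr1 coefB coefMXn; exact: H.
Qed.

Lemma tr_geom L : eqmod L (tr L fps_geom * (1 - 'X^1)) 1.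
Proof.
apply: step1X => // i Hi; rewrite coef_poly Hi coefC /fps_geom.
case: i Hi => [|i] Hi /=; first by rewrite subr0.
by rewrite subn1 /= coef_poly (ltnW Hi) subrr.
Qed.

Lemma dvd_small m i : (0 < m)%N -> (i < m)%N -> (m %| i)%N = (i == 0)%N.
Proof.
move=> Hm Hi; case: i Hi => [|i] Hi; first by rewrite dvdn0.
apply/negbTE/negP => H; have := dvdn_leq (ltn0Sn i) H; lia.
Qed.

Lemma dvd_sub m i : (m <= i)%N -> (m %| i - m)%N = (m %| i)%N.
Proof. by move=> H; rewrite -{2}(subnK H) dvdn_addl ?dvdnn. Qed.

Lemma tr_inv L m : (0 < m)%N -> eqmod L (tr L (fps_inv_sq m) * (1 - 'X^m) ^+ 2) 1.
Proof.
move=> Hm.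
set d : P := \poly_(i < L) (if (m %| i)%N then 1 else 0).
have H1 : eqmod L (tr L (fps_inv_sq m) * (1 - 'X^m)) d.
  apply: step1X => // i Hi; rewrite !coef_poly Hi /fps_inv_sq.
  case: ltnP => Hmi.
    rewrite subr0 dvd_small //; case: eqP => [->|] //.
    by rewrite div0n.
  rewrite (leq_ltn_trans (leq_subr m i) Hi) dvd_sub //.
  case: ifP => Hd; last by rewrite subrr.
  rewrite -{1}(subnK Hmi) -{2}(mul1n m) divnDMl // addn1 mulrS; exact: addrK.
have H2 : eqmod L (d * (1 - 'X^m)) 1.
  apply: step1X => // i Hi; rewrite !coef_poly Hi coef1.
  case: ltnP => Hmi.
    by rewrite subr0 dvd_small //; case: (i == 0)%N.
  rewrite (leq_ltn_trans (leq_subr m i) Hi) dvd_sub //.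
  have -> : (i == 0)%N = false by apply/negbTE; lia.
  by case: ifP; rewrite subrr.
rewrite expr2 mulrA; apply: eqmod_trans (eqmodM H1 (@eqmod_refl _ _ _)) H2.
Qed.

Lemma tr_pl2 L N : (0 < N)%N -> eqmod L (tr L (pl2_partial N) * Pr R N ^+ 2) (1 - 'X).
Proof.
case: N => // N _; elim: N => [|N IH].
  rewrite /= /Pr big_ord1 expr2 mulrA -[X in eqmod _ _ X]mul1r.
  apply: eqmodM; [exact: tr_geom | rewrite expr1; exact: eqmod_refl].
rewrite (_ : pl2_partial N.+2 = fps_mul (pl2_partial N.+1) (fps_inv_sq N.+2)) //.
rewrite PrS.
apply: eqmod_trans (eqmodM (@tr_mul _ _ _) (@eqmod_refl _ _ _)) _.
rewrite (_ : tr L (pl2_partial N.+1) * tr L (fps_inv_sq N.+2) * (Pr R N.+1 * (1 - 'X^(N.+2))) ^+ 2 = (tr L (pl2_partial N.+1) * Pr R N.+1 ^+ 2) *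
   (tr L (fps_inv_sq N.+2) * (1 - 'X^(N.+2)) ^+ 2)); last by ring.
rewrite -[X in eqmod _ _ X]mulr1; apply: eqmodM; [exact: IH | exact: tr_inv].
Qed.
End J.

End MJ.
Import MJ.


Section K.
Local Open Scope ring_scope.

Lemma main_coef M : (3 <= M %% 5)%N -> (pl2 M %% 5 = 0)%N.
Proof.
move=> HM.
have HM0 : (0 < M)%N by lia.
have h5 : (5%:R : 'F_5) = 0 by exact: pchar_Fp_0.
set a : {poly 'F_5} := tr 'F_5 M.+1 (pl2_partial M).
have H1 : eqmod M.+1 (a * Pr 'F_5 M ^+ 2) (1 - 'X) by exact: tr_pl2.
have H2 : eqmod M.+1 (a * Pr 'F_5 M ^+ 5) ((1 - 'X) * Pr 'F_5 M ^+ 3).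
  rewrite (_ : a * _ ^+ 5 = (a * Pr 'F_5 M ^+ 2) * Pr 'F_5 M ^+ 3); last first.
    by rewrite -mulrA -exprD.
  exact: eqmodM H1 (@eqmod_refl _ _ _).
have HG : forall i, (i < M.+1)%N -> (3 <= i %% 5)%N -> ((1 - 'X) * Pr 'F_5 M ^+ 3)`_i = 0.
  move=> i Hi Hi5; rewrite mulrBl mul1r coefB coefXM.
  have -> : (i == 0)%N = false by apply/negbTE; lia.
  rewrite !Pr3_coef // ?subr0 //; lia.
have := key H2 (Pr5_0 _ _) (supp5_Pr5 h5 _) HG (ltnSn M) HM.
rewrite /a coef_poly ltnSn => /eqP.
rewrite -(dvdn_pcharf (pchar_Fp (isT : prime 5))) => /dvdnP [k Hk].
by rewrite /pl2 Hk modnMl.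
Qed.
End K.

Theorem theorem4 (n : nat) :
  pl2 (5 * n + 3) %% 5 = 0 /\ pl2 (5 * n + 4) %% 5 = 0.
Proof. by split; apply: main_coef; lia. Qed.
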